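(* Let $k \geq 1$ be a finite integer. The consensus number of the atomic $k$-sliding read/write register type is less than $k+1$; that is, there is no wait-free algorithm implementing consensus among $k+1$ crash-prone asynchronous processes that communicate through atomic read/write registers and any number of atomic $k$-sliding read/write registers.
   Context: System model: $n$ sequential asynchronous processes $p_1,\dots,p_n$ communicating through shared atomic objects; any number of processes may crash (halt prematurely, never recovering); implementations must be wait-free (every operation invoked by a non-crashed process terminates regardless of the behavior of the others). A consensus object provides a single operation $\mathrm{propose}(v)$, invoked at most once per process and returning a value, satisfying: Validity (a decided value was proposed by some process), Agreement (no two processes decide different values), Termination (every correct process that invokes $\mathrm{propose}()$ decides). The consensus number of an object type $T$ is the largest $n$ such that consensus can be wait-free implemented among $n$ processes using atomic read/write registers and objects of type $T$ ($+\infty$ if no such finite $n$ exists). An atomic $k$-sliding read/write register is a shared object whose state is a sequence of values (initially empty), with two atomic (linearizable) operations: $\mathrm{write}(v)$ appends $v$ to the end of the sequence, and $\mathrm{read}()$ returns the ordered sequence of the last $k$ values written before it in the linearization order, where if only $x<k$ values have been written the $k-x$ missing values are replaced by a default value $\bot$. *)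

(* Defs.v *)
From mathcomp Require Import all_boot.
Set Implicit Arguments. Unset Strict Implicit. Unset Printing Implicit Defensive.

(* Values stored in objects range over an arbitrary type Val; the default
   value bottom is represented by None : option Val. *)

Inductive action (Obj Val Inp : Type) : Type :=
  | ARead   of Obj
  | AWrite  of Obj & Val
  | ADecide of Inp.

(* A deterministic protocol for n processes, proposal values in Inp, using
   plain registers and k-sliding registers.  [sliding o] = true means that
   object o is a k-sliding register; otherwise it is a plain register with
   initial value [init o].  Each process starts in state [start i v] when it
   invokes propose(v); [act i s] is the next operation of process i in local
   state s, and [trans i s r] is the new local state after the operation
   returns r (the sequence read, or [::] for a write). *)
Record protocol (n : nat) (Inp : Type) : Type := Protocol {
  Val : Type;
  Obj : eqType;
  St  : Type;
  sliding : Obj -> bool;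
  init : Obj -> Val;
  start : 'I_n -> Inp -> St;
  act : 'I_n -> St -> action Obj Val Inp;
  trans : 'I_n -> St -> seq (option Val) -> St
}.

Section Semantics.
Variables (k n : nat) (Inp : Type) (P : protocol n Inp).

(* Global configuration: local states and, for each object, the sequence of
   values written into it so far (most recent first). *)
Record config : Type := Config {
  cst : 'I_n -> St P;
  cmem : Obj P -> seq (Val P)
}.

(* k-sliding read: the last k values written, in order (oldest first),
   missing values replaced by bottom (None). *)
Definition sliding_read (h : seq (Val P)) : seq (option (Val P)) :=
  rev (mkseq (fun j => nth None (map Some h) j) k).

Definition read_obj (o : Obj P) (h : seq (Val P)) : seq (option (Val P)) :=
  if sliding o then sliding_read h else [:: Some (head (init o) h)].

Definition upd_st (c : config) (i : 'I_n) (s : St P) : 'I_n -> St P :=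
  fun j => if j == i then s else cst c j.

(* One atomic step of process i (a no-op once i has decided). *)
Definition step (c : config) (i : 'I_n) : config :=
  let s := cst c i in
  match act i s with
  | ARead o => Config (upd_st c i (trans i s (read_obj o (cmem c o)))) (cmem c)
  | AWrite o v =>
      Config (upd_st c i (trans i s [::]))
             (fun o' => if o' == o then v :: cmem c o' else cmem c o')
  | ADecide _ => c
  end.

Definition init_config (inp : 'I_n -> Inp) : config :=
  Config (fun i => start P i (inp i)) (fun _ => [::]).

(* The configuration after t steps of the schedule sched, where every
   process i has invoked propose(inp i).  A process that crashes is simply
   scheduled only finitely often. *)
Fixpoint exec (inp : 'I_n -> Inp) (sched : nat -> 'I_n) (t : nat) : config :=
  match t with
  | 0 => init_config inp
  | t'.+1 => step (exec inp sched t') (sched t')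
  end.

Definition decision (c : config) (i : 'I_n) : option Inp :=
  match act i (cst c i) with ADecide d => Some d | _ => None end.

Definition wf_consensus : Prop :=
  forall (inp : 'I_n -> Inp) (sched : nat -> 'I_n),
    (forall t1 t2 i j d1 d2,
        decision (exec inp sched t1) i = Some d1 ->
        decision (exec inp sched t2) j = Some d2 -> d1 = d2) /\
    (forall t i d, decision (exec inp sched t) i = Some d ->
        exists j, inp j = d) /\
    (forall i, (forall t, exists t', t <= t' /\ sched t' = i) ->
        exists t, decision (exec inp sched t) i <> None).
End Semantics.

(* Main.v *)
Require Import Defs.
From mathcomp Require Import all_boot.
From Stdlib Require Import Classical ClassicalEpsilon Lia.
From mathcomp Require Import zify.
Set Implicit Arguments. Unset Strict Implicit. Unset Printing Implicit Defensive.

Section Proof.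
Variables (k : nat) (Inp : Type) (P : protocol k.+1 Inp).
Local Notation n := k.+1.
Local Notation cfg := (config P).
Local Notation stp := (@step k n Inp P).
Definition run (c : cfg) (s : seq 'I_n) : cfg := foldl stp c s.

Lemma run_cat c s1 s2 : run c (s1 ++ s2) = run (run c s1) s2.
Proof. by rewrite /run foldl_cat. Qed.
Lemma run_rcons c s x : run c (rcons s x) = stp (run c s) x.
Proof. by rewrite /run foldl_rcons. Qed.

Lemma cst_step_other c y x : y != x -> cst (stp c y) x = cst c x.
Proof.
move=> yx; rewrite /step; case: (act _ _) => [o|o v|d] //=;
by rewrite /upd_st eq_sym (negbTE yx).
Qed.

Lemma dec_step c x y d : decision c x = Some d -> decision (stp c y) x = Some d.
Proof.
case: (eqVneq y x) => [->|yx].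
  move=> h; rewrite /step; case E: (act x (cst c x)) => //;
  by move: h; rewrite /decision E.
by move=> h; rewrite /decision cst_step_other.
Qed.

Lemma dec_run c s x d : decision c x = Some d -> decision (run c s) x = Some d.
Proof. elim: s c => [|y s IH] c //= h; apply: IH; exact: dec_step. Qed.

Definition eqv (X : pred 'I_n) (c1 c2 : cfg) :=
  (forall x, ~~ X x -> cst c1 x = cst c2 x) /\
  forall o, read_obj k o (cmem c1 o) = read_obj k o (cmem c2 o).

Definition win (h : seq (Val P)) j := nth None (map Some h) j.

Lemma sliding_readE h1 h2 :
  sliding_read k (P:=P) h1 = sliding_read k (P:=P) h2 <-> forall j, j < k -> win h1 j = win h2 j.
Proof.
rewrite /sliding_read; split.
  move=> /(congr1 rev); rewrite !revK => E j jk.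
  by have := congr1 (nth None ^~ j) E; rewrite !nth_mkseq.
move=> h; congr rev; apply: (@eq_from_nth _ None); first by rewrite !size_mkseq.
by move=> j; rewrite size_mkseq => jk; rewrite !nth_mkseq //; apply: h.
Qed.

Lemma read_cons (o : Obj P) h1 h2 v :
  read_obj k o h1 = read_obj k o h2 -> read_obj k o (v :: h1) = read_obj k o (v :: h2).
Proof.
rewrite /read_obj; case: (sliding o) => // /sliding_readE h; apply/sliding_readE.
move=> [|j] jk //=; apply: h; exact: ltnW.
Qed.

Lemma eqv_step X c1 c2 x : eqv X c1 c2 -> ~~ X x -> eqv X (stp c1 x) (stp c2 x).
Proof.
move=> [hs hm] hx; rewrite /step (hs x hx).
case: (act _ _) => [o|o v|d] //=.
- split=> [y hy|//] /=; rewrite /upd_st; case: (y == x); last exact: hs.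
  by rewrite (hm o).
- split=> [y hy|o'] /=; rewrite /upd_st.
    by case: (y == x); [|exact: hs].
  by case: (o' == o); [apply: read_cons|].
Qed.

Lemma eqv_run X c1 c2 s : eqv X c1 c2 -> all (fun x => ~~ X x) s ->
  eqv X (run c1 s) (run c2 s).
Proof.
elim: s c1 c2 => [|y s IH] c1 c2 //= h /andP[hy hs]; apply: IH => //; exact: eqv_step.
Qed.

Lemma eqv_dec X c1 c2 z : eqv X c1 c2 -> ~~ X z -> decision c1 z = decision c2 z.
Proof. by move=> [hs _] hz; rewrite /decision hs. Qed.

Lemma step_write c x o w : act x (cst c x) = @AWrite _ _ _ o w ->
  stp c x = Config (upd_st c x (trans x (cst c x) [::]))
             (fun o' => if o' == o then w :: cmem c o' else cmem c o').
Proof. by move=> h; rewrite /step h. Qed.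

Lemma step_read c x o : act x (cst c x) = @ARead _ _ _ o -> eqv (pred1 x) (stp c x) c.
Proof.
move=> h; rewrite /step h; split=> //= y hy.
by rewrite /upd_st (negbTE hy).
Qed.


Local Notation AW o w := (@AWrite _ _ _ o w).

Lemma run_writes c (o : Obj P) (w : 'I_n -> Val P) L : uniq L ->
  (forall x, x \in L -> act x (cst c x) = AW o (w x)) ->
  (forall y, cst (run c L) y = if y \in L then trans y (cst c y) [::] else cst c y) /\
  (forall o', cmem (run c L) o' = if o' == o then rev (map w L) ++ cmem c o else cmem c o').
Proof.
elim/last_ind: L => [|L x IH].
  move=> _ _; split=> // o'; by case: (eqVneq o' o) => [->|].
rewrite rcons_uniq => /andP[xL uL] hw.
have hw' : forall y, y \in L -> act y (cst c y) = AW o (w y).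
  by move=> y hy; apply: hw; rewrite mem_rcons in_cons hy orbT.
have [IHs IHm] := IH uL hw'.
have hx : act x (cst (run c L) x) = AW o (w x).
  by rewrite IHs (negbTE xL); apply: hw; rewrite mem_rcons mem_head.
rewrite run_rcons (step_write hx) /=; split.
  move=> y; rewrite /upd_st mem_rcons in_cons; case: eqP => [->|_] /=.
    by rewrite IHs (negbTE xL).
  exact: IHs.
move=> o'; rewrite IHm; case: ifP => h; rewrite h //.
by rewrite map_rcons rev_rcons.
Qed.

Lemma read_prefix (o : Obj P) (A h1 h2 : seq (Val P)) : 0 < size A -> k <= size A ->
  read_obj k o (A ++ h1) = read_obj k o (A ++ h2).
Proof.
rewrite /read_obj; case: (sliding o).
  move=> _ hk; apply/sliding_readE => j jk.
  rewrite /win !map_cat !nth_cat size_map.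
  by rewrite (leq_trans jk hk).
by case: A.
Qed.

Lemma count3 (s : seq 'I_n) i y : i != y ->
  count (fun x => (x != i) && (x != y)) s + count (pred1 i) s + count (pred1 y) s = size s.
Proof.
move=> iy; elim: s => [|a s IH] //=.
case E1: (a == i); case E2: (a == y) => /=.
all: first [by move: iy; rewrite -(eqP E1) -(eqP E2) eqxx | by rewrite -IH !add0n ?add1n ?addnS ?addSn | idtac].
Qed.

Definition rest (i y : 'I_n) := [seq x <- enum 'I_n | (x != i) && (x != y)].

Lemma size_rest i y : i != y -> (size (rest i y)).+1 = k.
Proof.
move=> iy; have := count3 (enum 'I_n) iy.
rewrite !count_uniq_mem ?enum_uniq // !mem_enum size_enum_ord size_filter /rest.
rewrite (_ : (i \in 'I_n) = true) // (_ : (y \in 'I_n) = true) // !addn1 => /eqP; rewrite eqSS => /eqP /= ->.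
by [].
Qed.

Definition sched_of (q : seq 'I_n) (f : nat -> 'I_n) t :=
  if t < size q then nth (f 0) q t else f (t - size q).

Local Notation c0 inp := (init_config P inp).

Lemma exec_run inp sched t : exec k P inp sched t = run (c0 inp) (mkseq sched t).
Proof. elim: t => [|t IH] //; by rewrite mkseqS run_rcons -IH. Qed.

Lemma mkseq_add (f : nat -> 'I_n) t u :
  mkseq f (t + u) = mkseq f t ++ mkseq (fun x => f (t + x)) u.
Proof.
rewrite /mkseq iotaD map_cat add0n -[in iota t u](addn0 t) iotaDl -map_comp.
by [].
Qed.

Lemma mkseq_sched q f u : mkseq (sched_of q f) (size q + u) = q ++ mkseq f u.
Proof.
rewrite mkseq_add; congr (_ ++ _).
  apply: (@eq_from_nth _ (f 0)); rewrite size_mkseq // => i hi.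
  by rewrite nth_mkseq // /sched_of hi.
apply: eq_mkseq => x; by rewrite /sched_of ltnNge leq_addr /= addKn.
Qed.

Lemma mkseq_sched_le q f t : t <= size q -> mkseq (sched_of q f) t = take t q.
Proof.
move=> ht; apply: (@eq_from_nth _ (f 0)); first by rewrite size_mkseq size_takel.
rewrite size_mkseq => i hi; rewrite nth_mkseq // nth_take // /sched_of.
by rewrite (leq_trans hi ht).
Qed.

Lemma sched_prefix q f t : exists s, mkseq (sched_of q f) t ++ s = q ++ mkseq f t.
Proof. by exists (mkseq (fun x => sched_of q f (t + x)) (size q)); rewrite -mkseq_add addnC mkseq_sched. Qed.

Lemma mkseq_const (z : 'I_n) m : mkseq (fun _ => z) m = nseq m z.
Proof.
apply: (@eq_from_nth _ z); rewrite ?size_mkseq ?size_nseq // => i hi.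
by rewrite nth_mkseq // nth_nseq hi.
Qed.

Hypothesis H : wf_consensus k P.

Lemma term inp q z : exists m d, decision (run (c0 inp) (q ++ nseq m z)) z = Some d.
Proof.
have [_ [_ T]] := H inp (sched_of q (fun _ => z)).
have [t ht] : exists t, decision (exec k P inp (sched_of q (fun _ => z)) t) z <> None.
  apply: T => t; exists (t + size q); split; first exact: leq_addr.
  by rewrite /sched_of ltnNge leq_addl.
exists t; move: ht; rewrite exec_run; case E: decision => [d|] // _; exists d.
have [s hs] := sched_prefix q (fun _ => z) t.
by have := dec_run s E; rewrite -run_cat hs mkseq_const.
Qed.

Lemma agree inp p s x y d1 d2 : decision (run (c0 inp) p) x = Some d1 ->
  decision (run (c0 inp) (p ++ s)) y = Some d2 -> d1 = d2.
Proof.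
have [A _] := H inp (sched_of (p ++ s) (fun _ => ord0)).
move=> h1 h2; apply: (A (size p) (size (p ++ s)) x y); rewrite exec_run mkseq_sched_le.
- by rewrite take_size_cat.
- by rewrite size_cat leq_addr.
- by rewrite take_size.
- by [].
Qed.

Lemma valid inp p x d : decision (run (c0 inp) p) x = Some d -> exists j, inp j = d.
Proof.
have [_ [V _]] := H inp (sched_of p (fun _ => ord0)).
move=> h; apply: (V (size p) x); rewrite exec_run mkseq_sched_le // take_size //.
Qed.

Definition Dec c d := exists s x, decision (run c s) x = Some d.
Definition Biv c := exists d1 d2, d1 <> d2 /\ Dec c d1 /\ Dec c d2.

Lemma Dec_run c s d : Dec (run c s) d -> Dec c d.
Proof. by move=> [s' [x h]]; exists (s ++ s'), x; rewrite run_cat. Qed.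

Lemma uni c d1 d2 : ~ Biv c -> Dec c d1 -> Dec c d2 -> d1 = d2.
Proof. move=> nb h1 h2; apply: NNPP => ne; apply: nb; by exists d1, d2. Qed.

Lemma dec_exists inp q : exists d, Dec (run (c0 inp) q) d.
Proof.
have [m [d h]] := term inp q ord0; exists d, (nseq m ord0), ord0.
by rewrite -run_cat.
Qed.

Lemma biv_undec inp q x : Biv (run (c0 inp) q) -> decision (run (c0 inp) q) x = None.
Proof.
move=> [d1 [d2 [ne [[s1 [x1 h1]] [s2 [x2 h2]]]]]].
case E: decision => [d|] //; exfalso; apply: ne.
rewrite -run_cat in h1; rewrite -run_cat in h2.
by rewrite -(agree E h1) (agree E h2).
Qed.

Definition crit inp q := Biv (run (c0 inp) q) /\ forall i, ~ Biv (stp (run (c0 inp) q) i).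

Lemma CL inp q i j d1 d2 (X : pred 'I_n) z L1 L2 : crit inp q ->
  Dec (stp (run (c0 inp) q) i) d1 -> Dec (stp (run (c0 inp) q) j) d2 -> d1 <> d2 ->
  ~~ X z ->
  eqv X (run (stp (run (c0 inp) q) i) L1) (run (stp (run (c0 inp) q) j) L2) -> False.
Proof.
move=> [_ cr] h1 h2 ne hz he.
have [m [d hd]] := term inp (q ++ j :: L2) z.
rewrite run_cat run_cat /= in hd.
have he' := eqv_run (s := nseq m z) he.
have hd1 : decision (run (run (stp (run (c0 inp) q) i) L1) (nseq m z)) z = Some d.
  rewrite (eqv_dec (he' _) hz) //.
  by rewrite all_nseq hz orbT.
apply: ne; rewrite (uni (cr i) h1 (Dec_run (Dec_run (ex_intro _ [::] (ex_intro _ z hd1))))).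
by rewrite (uni (cr j) h2 (Dec_run (Dec_run (ex_intro _ [::] (ex_intro _ z hd))))).
Qed.

Lemma first_step inp q d : crit inp q -> Dec (run (c0 inp) q) d ->
  exists i, Dec (stp (run (c0 inp) q) i) d.
Proof.
move=> [b _] [[|i s] [x h]].
  by rewrite /= (biv_undec x b) in h.
by exists i, s, x.
Qed.

Lemma neq_of inp q i j d1 d2 : crit inp q ->
  Dec (stp (run (c0 inp) q) i) d1 -> Dec (stp (run (c0 inp) q) j) d2 -> d1 <> d2 -> i != j.
Proof.
move=> [_ cr] h1 h2 ne; apply/eqP => e; subst j; apply: ne; exact: (uni (cr i) h1 h2).
Qed.

Lemma is_write inp q i j d1 d2 : crit inp q ->
  Dec (stp (run (c0 inp) q) i) d1 -> Dec (stp (run (c0 inp) q) j) d2 -> d1 <> d2 ->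
  exists o w, act i (cst (run (c0 inp) q) i) = AW o w.
Proof.
move=> cr h1 h2 ne; have ij := neq_of cr h1 h2 ne.
case E: (act i (cst (run (c0 inp) q) i)) => [o|o w|d].
- exfalso; apply: (@CL inp q i j d1 d2 (pred1 i) j [:: j] [::]) => //=.
    by rewrite eq_sym.
  apply: eqv_step; first exact: (step_read E).
  by rewrite /= eq_sym.
- by exists o, w.
- by have := biv_undec i cr.1; rewrite /decision E.
Qed.

Lemma PW inp q i j d1 d2 : crit inp q ->
  Dec (stp (run (c0 inp) q) i) d1 -> Dec (stp (run (c0 inp) q) j) d2 -> d1 <> d2 ->
  exists o wi wj, [/\ sliding o, act i (cst (run (c0 inp) q) i) = AW o wi
                 & act j (cst (run (c0 inp) q) j) = AW o wj].
Proof.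
move=> cr h1 h2 ne; have ij := neq_of cr h1 h2 ne.
have [o [wi E1]] := is_write cr h1 h2 ne.
have [o' [wj E2]] := is_write cr h2 h1 (nesym ne).
set c := run (c0 inp) q in E1 E2 h1 h2 *.
have E2' : act j (cst (stp c i) j) = AW o' wj by rewrite cst_step_other.
have E1' : act i (cst (stp c j) i) = AW o wi by rewrite cst_step_other // eq_sym.
case: (eqVneq o o') => [eo|neo].
  subst o'; case S: (sliding o); first by exists o, wi, wj.
  exfalso; apply: (@CL inp q i j d1 d2 (pred1 i) j [:: j] [::]) => //=.
    by rewrite eq_sym.
  rewrite (step_write E2') (step_write E1) (step_write E2) /=; split.
    move=> y hy; rewrite /upd_st /=; case: (eqVneq y j) => [_|_].
      by rewrite eq_sym (negbTE ij).
    by case: ifP => // /eqP e; move: hy; rewrite e /= eqxx.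
  move=> o''; case: (eqVneq o'' o) => [->|ne'] /=.
    by rewrite eqxx /read_obj S.
  by rewrite (negbTE ne').
exfalso; apply: (@CL inp q i j d1 d2 pred0 i [:: j] [:: i]) => //=.
rewrite (step_write E2') (step_write E1') (step_write E1) (step_write E2) /=; split.
  move=> y _; rewrite /upd_st /=.
  have ji : (j == i) = false by rewrite eq_sym (negbTE ij).
  case: (eqVneq y j) => [e|yj]; case: (eqVneq y i) => [e'|yi] //.
  - by move: ij; rewrite -e -e' eqxx.
  - by subst y; rewrite ji.
  - by subst y; rewrite (negbTE ij).
move=> o''; case: (eqVneq o'' o') => [e1|n1]; case: (eqVneq o'' o) => [e2|n2] /=.
- by move: neo; rewrite -e1 -e2 eqxx.
- by rewrite e1 eqxx eq_sym (negbTE neo).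
- by rewrite e2 eqxx (negbTE neo).
- by rewrite (negbTE n1) (negbTE n2).
Qed.

Lemma crit_false inp q : crit inp q -> False.
Proof.
move=> cr; have [d1 [d2 [ne [D1 D2]]]] := cr.1.
have [i1 h1] := first_step cr D1.
have [i2 h2] := first_step cr D2.
have i12 := neq_of cr h1 h2 ne.
have [o [wi1 [wi2 [so E1 E2]]]] := PW cr h1 h2 ne.
set c := run (c0 inp) q in E1 E2 h1 h2 *.
have allw : forall x, exists w, act x (cst c x) = AW o w.
  move=> x; have [dx hx] := dec_exists inp (q ++ [:: x]).
  rewrite run_cat /= in hx.
  case: (classic (dx = d1)) => [e|nx].
    subst dx; have [o' [wx [w2 [_ Ex E2']]]] := PW cr hx h2 ne.
    rewrite E2 in E2'; case: E2' => eo _; subst o'; by exists wx.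
  have [o' [w1 [wx [_ E1' Ex]]]] := PW cr h1 hx (nesym nx).
  rewrite E1 in E1'; case: E1' => eo _; subst o'; by exists wx.
pose wv x := if act x (cst c x) is AWrite _ v then v else init o.
have hw : forall x, act x (cst c x) = AW o (wv x).
  by move=> x; have [w E] := allw x; rewrite /wv E.
pose L := i2 :: rest i1 i2.
have uL : uniq L.
  rewrite /L /= /rest mem_filter eqxx andbF /=.
  exact: filter_uniq (enum_uniq _).
have i1L : i1 \notin L.
  by rewrite /L in_cons (negbTE i12) /= /rest mem_filter eqxx.
have szL : size L = k by rewrite /L /= size_rest.
apply: (@CL inp q i1 i2 d1 d2 (pred1 i1) i2 L (rest i1 i2) cr h1 h2 ne).
  by rewrite /= eq_sym.
change (run (stp c i2) (rest i1 i2)) with (run c L).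
have hw1 : forall x, x \in L -> act x (cst (stp c i1) x) = AW o (wv x).
  move=> x hx; rewrite cst_step_other ?hw //.
  by apply: contraNneq i1L => ->.
have hw2 : forall x, x \in L -> act x (cst c x) = AW o (wv x) by move=> x _.
have [s1 m1] := run_writes uL hw1.
have [s2 m2] := run_writes uL hw2.
split.
  move=> y hy; rewrite s1 s2 cst_step_other //.
  by rewrite eq_sym.
move=> o'; rewrite m1 m2 (step_write (hw i1)) /= eqxx; case: ifP => h //.
apply: read_prefix; rewrite size_rev //.
by rewrite /= size_map (size_rest i12).
by rewrite h.
Qed.


Lemma pigeon (g : nat -> 'I_n) : exists z, forall t, exists t', t <= t' /\ g t' = z.
Proof.
apply: NNPP => hn.
have hb : forall z, exists B, forall t', B <= t' -> g t' <> z.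
  move=> z; apply: NNPP => hz; apply: hn; exists z => t.
  apply: NNPP => ht; apply: hz; exists t => t' le e; apply: ht; by exists t'.
have hl : forall l : seq 'I_n, exists B, forall z, z \in l -> forall t', B <= t' -> g t' <> z.
  elim=> [|a l [B hB]]; first by exists 0.
  have [Ba hBa] := hb a.
  exists (maxn Ba B) => z; rewrite in_cons => /orP[/eqP->|hz] t' le.
    apply: hBa; exact: leq_trans (leq_maxl _ _) le.
  apply: hB => //; exact: leq_trans (leq_maxr _ _) le.
have [B hB] := hl (enum 'I_n).
by apply: (hB (g B) _ B (leqnn B) erefl); rewrite mem_enum.
Qed.

Definition nxt (c : cfg) : 'I_n := epsilon (inhabits ord0) (fun i => Biv (stp c i)).

Fixpoint chain (c : cfg) t := match t with
  | 0 => c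
  | t'.+1 => stp (chain c t') (nxt (chain c t'))
  end.

Lemma chain_run c t : chain c t = run c (mkseq (fun u => nxt (chain c u)) t).
Proof. elim: t => [|t IH] //; by rewrite mkseqS run_rcons -IH. Qed.

Lemma crit_exists inp p : Biv (run (c0 inp) p) -> exists s, crit inp (p ++ s).
Proof.
move=> b; apply: NNPP => nc.
have step_biv : forall s, Biv (run (c0 inp) (p ++ s)) ->
    Biv (stp (run (c0 inp) (p ++ s)) (nxt (run (c0 inp) (p ++ s)))).
  move=> s bs; apply: (epsilon_spec (inhabits ord0) (fun i => Biv (stp _ i))).
  apply: NNPP => ne; apply: nc; exists s; split=> // i bi; apply: ne; by exists i.
pose f u := nxt (chain (run (c0 inp) p) u).
have bc : forall t, Biv (chain (run (c0 inp) p) t).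
  elim=> [|t IH] //=.
  move: IH; rewrite chain_run -run_cat; exact: step_biv.
have [z hz] := pigeon (sched_of p f).
have [_ [_ T]] := H inp (sched_of p f).
have [t ht] := T z hz.
move: ht; rewrite exec_run; case E: decision => [d|] // _.
have [s hs] := sched_prefix p f t.
have := dec_run s E; rewrite -run_cat hs run_cat -/f.
have -> : run (run (c0 inp) p) (mkseq f t) = chain (run (c0 inp) p) t by rewrite chain_run.
have := bc t; rewrite chain_run -run_cat => bt.
by rewrite (biv_undec z bt).
Qed.

Lemma init_biv (hk : 0 < k) (a b : Inp) (hab : a <> b) : exists inp, Biv (run (c0 inp) [::]).
Proof.
pose inpj (j : nat) (x : 'I_n) := if x < j then b else a.
apply: NNPP => nb.
have nbj : forall j, ~ Biv (run (c0 (inpj j)) [::]) by move=> j bj; apply: nb; exists (inpj j).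
pose Pa j := Dec (run (c0 (inpj j)) [::]) a.
have Pa0 : Pa 0.
  have [d hd] := dec_exists (inpj 0) [::].
  have [s [x hx]] := hd; have [y hy] := valid (p := s) hx.
  by move: hy; rewrite /inpj ltn0 => e; rewrite /Pa e.
have nPan : ~ Pa n.
  move=> [s [x hx]]; have [y hy] := valid (p := s) hx.
  by move: hy; rewrite /inpj ltn_ord => hy; apply: hab.
have gen : forall m, ~ Pa m -> exists j, j < m /\ Pa j /\ ~ Pa j.+1.
  elim=> [|m IH] h; first by [].
  case: (classic (Pa m)) => pm; first by exists m.
  have [j [jm rs]] := IH pm; exists j; split => //; exact: ltnW.
have [j [jn [pj npj]]] := gen n nPan.
pose x := Ordinal jn.
pose z : 'I_n := if x == ord0 then ord_max else ord0.
have zx : z != x.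
  rewrite /z; case: (eqVneq x ord0) => [e0|ne].
    rewrite e0; apply/eqP => e; have := congr1 val e => /= e'.
    by move: hk; rewrite e'.
  by rewrite eq_sym.
have he : eqv (pred1 x) (run (c0 (inpj j.+1)) [::]) (run (c0 (inpj j)) [::]).
  split=> // y hy /=; rewrite /inpj ltnS leq_eqVlt.
  have -> : (nat_of_ord y == j) = false.
    apply/negbTE; apply: contra hy => /eqP e; apply/eqP/val_inj => /=; exact: e.
  by [].
have [m [d hd]] := term (inpj j.+1) [::] z.
have hd' : decision (run (run (c0 (inpj j)) [::]) (nseq m z)) z = Some d.
  rewrite -(eqv_dec (eqv_run he _) zx) //.
  by rewrite all_nseq zx orbT.
have e : d = a := uni (nbj j) (ex_intro _ (nseq m z) (ex_intro _ z hd')) pj.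
subst d; apply: npj; exists (nseq m z), z; exact: hd.
Qed.

Lemma no_wf (hk : 0 < k) (a b : Inp) (hab : a <> b) : False.
Proof.
have [inp b0] := init_biv hk hab.
have [s cr] := crit_exists b0.
exact: crit_false cr.
Qed.

End Proof.

Theorem theorem2 (k : nat) (hk : 1 <= k) (Inp : Type) (a b : Inp) (hab : a <> b)
  (P : protocol k.+1 Inp) : ~ wf_consensus k P.
Proof. move=> H; exact: (no_wf H hk hab). Qed.
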